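(* Let $f_1,\dots,f_n$ be convex and differentiable with $\|\nabla f_i(x)-\nabla f_i(y)\|\le L\|x-y\|$, $f=\frac1n\sum_if_i$. Fix $x,\tilde x\in\mathbb{R}^d$, integers $N,B\ge1$, $b\ge2$ and $\lambda\in(0,1]$. For each worker $i=1,\dots,N$ draw $B$ indices independently and uniformly from $\{1,\dots,n\}$ (independently across workers), forming $I^i$, let $u^i=\frac1B\sum_{a\in I^i}[\nabla f_a(x)-\nabla f_a(\tilde x)]$, $\delta^i=\frac{\lambda\|u^i\|_\infty}{2^{b-1}-1}$, and $v=\frac1N\sum_{i=1}^NQ_{(\delta^i,b)}(u^i)+\nabla f(\tilde x)$ (quantization roundings independent given the indices). Let $d_\lambda\ge0$ be such that almost surely, for each $i$, the number of coordinates of $u^i$ outside $[-2^{b-1}\delta^i,(2^{b-1}-1)\delta^i]$ is at most $d_\lambda$. Let $\zeta=\frac{d\lambda^2}{4(2^{b-1}-1)^2}+d_\lambda(1-\lambda)^2+\frac{1}{NB}$. Then $$\mathbf{E}\|v-\nabla f(x)\|^2\le 4L\zeta\,\big[f(\tilde x)-f(x)-\langle\nabla f(x),\tilde x-x\rangle\big].$$ Moreover, if $J$ is a further multiset of $B$ indices drawn independently and uniformly from $\{1,\dots,n\}$, independently of everything else, and $\hat v=\frac1B\sum_{j\in J}[\nabla f_j(x)-\nabla f_j(\tilde x)]+\nabla f(\tilde x)$, then $$\mathbf{E}\|\hat v-v\|^2\le 4L\Big[\frac{1}{2B}+\frac{d\lambda^2}{4(2^{b-1}-1)^2}+d_\lambda(1-\lambda)^2+\frac{1}{NB}\Big]\big[f(\tilde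 x)-f(x)-\langle\nabla f(x),\tilde x-x\rangle\big].$$
   Context: Quantization: for an integer $b\ge2$ and $\delta>0$, $\mathrm{dom}(\delta,b)=\{k\delta:k\in\mathbb{Z},-2^{b-1}\le k\le 2^{b-1}-1\}$; the scalar quantizer $Q_{(\delta,b)}(y)$, for $y\in[-2^{b-1}\delta,(2^{b-1}-1)\delta]$ with $z$ the largest grid point $\le y$, equals $z$ with probability $\frac{z+\delta-y}{\delta}$ and $z+\delta$ otherwise; for $y$ outside this interval it equals the nearest grid point. On vectors it acts coordinatewise with independent randomness; if $\delta=0$ (only when the vector is $0$) the output is $0$. $\|\cdot\|_\infty$ is the max norm. *)

(* Defs.v *)
(* Stdlib (classical reals R). Vectors of R^d are functions nat -> R,
   of which only the coordinates 0..d-1 are used. *)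
From Stdlib Require Import Reals List Arith.
Open Scope R_scope.

Fixpoint fsum (n : nat) (f : nat -> R) : R :=
  match n with O => 0 | S n' => fsum n' f + f n' end.

Definition vsub (u v : nat -> R) : nat -> R := fun k => u k - v k.
Definition inner (d : nat) (u v : nat -> R) : R := fsum d (fun k => u k * v k).
Definition norm (d : nat) (u : nat -> R) : R := sqrt (fsum d (fun k => u k ^ 2)).
Fixpoint ninf (d : nat) (u : nat -> R) : R :=
  match d with O => 0 | S d' => Rmax (ninf d' u) (Rabs (u d')) end.

Definition convex_on (f : (nat -> R) -> R) : Prop :=
  forall (x y : nat -> R) (t : R), 0 <= t <= 1 ->
    f (fun k => t * x k + (1 - t) * y k) <= t * f x + (1 - t) * f y.

Definition has_gradient (d : nat) (f : (nat -> R) -> R) (g : (nat -> R) -> (nat -> R)) : Prop :=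
  forall x : nat -> R, forall eps : R, 0 < eps -> exists delta : R, 0 < delta /\
    forall y : nat -> R, norm d (vsub y x) < delta ->
      Rabs (f y - f x - inner d (g x) (vsub y x)) <= eps * norm d (vsub y x).

Definition upd {A : Type} (s : nat -> A) (j : nat) (a : A) : nat -> A :=
  fun k => if Nat.eqb k j then a else s k.

(* Expectation of F(omega_0,...,omega_{m-1}) where the omega_j are independent,
   omega_j distributed according to the finite distribution D j
   (a list of (outcome, probability) pairs). Unused slots are set to a0. *)
Fixpoint Eprod {A : Type} (a0 : A) (m : nat) (D : nat -> list (A * R))
    (F : (nat -> A) -> R) : R :=
  match m with
  | O => F (fun _ => a0)
  | S m' => Eprod a0 m' D (fun s =>
      fold_right Rplus 0 (map (fun aw => snd aw * F (upd s m' (fst aw))) (D m')))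
  end.

(* uniform distribution on {0,...,n-1} (the indices of f_1..f_n, 0-based) *)
Definition Dunif (n : nat) : list (nat * R) := map (fun a => (a, / INR n)) (seq 0 n).

Definition qdist (delta : R) (b : nat) (y : R) : list (R * R) :=
  let M := 2 ^ (b - 1) in
  let lo := - M * delta in
  let hi := (M - 1) * delta in
  if Req_EM_T delta 0 then (0, 1) :: nil
  else if Rle_dec lo y then
    if Rle_dec y hi then
      let z := IZR (Int_part (y / delta)) * delta in
      (z, (z + delta - y) / delta) :: (z + delta, (y - z) / delta) :: nil
    else (hi, 1) :: nil
  else (lo, 1) :: nil.

Definition favg (n : nat) (f : nat -> (nat -> R) -> R) (x : nat -> R) : R :=
  / INR n * fsum n (fun i => f i x).
Definition gavg (n : nat) (g : nat -> (nat -> R) -> (nat -> R)) (x : nat -> R) : nat -> R :=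
  fun k => / INR n * fsum n (fun i => g i x k).

(* u^i, where worker i's B indices are I (i*B), ..., I (i*B + B - 1) *)
Definition uvec (g : nat -> (nat -> R) -> (nat -> R)) (x xt : nat -> R)
    (B : nat) (I : nat -> nat) (i : nat) : nat -> R :=
  fun k => / INR B * fsum B (fun a => g (I (i * B + a)%nat) x k - g (I (i * B + a)%nat) xt k).

Definition qdelta (d : nat) (lam : R) (b : nat) (u : nat -> R) : R :=
  lam * ninf d u / (2 ^ (b - 1) - 1).

(* distribution of the rounding slot j = i*d + k (worker i, coordinate k) *)
Definition Dq (g : nat -> (nat -> R) -> (nat -> R)) (x xt : nat -> R)
    (d B b : nat) (lam : R) (I : nat -> nat) (j : nat) : list (R * R) :=
  let u := uvec g x xt B I (j / d) in
  qdist (qdelta d lam b u) b (u (j mod d)).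

(* v = (1/N) sum_i Q(u^i) + grad f(xt), with r (i*d+k) the k-th coordinate of Q(u^i) *)
Definition vvec (n : nat) (g : nat -> (nat -> R) -> (nat -> R)) (xt : nat -> R)
    (d N : nat) (r : nat -> R) : nat -> R :=
  fun k => / INR N * fsum N (fun i => r (i * d + k)%nat) + gavg n g xt k.

Definition vhat (n : nat) (g : nat -> (nat -> R) -> (nat -> R)) (x xt : nat -> R)
    (B : nat) (J : nat -> nat) : nat -> R :=
  fun k => / INR B * fsum B (fun a => g (J a) x k - g (J a) xt k) + gavg n g xt k.

Definition count_out (d : nat) (lo hi : R) (u : nat -> R) : R :=
  fsum d (fun k => if Rle_dec lo (u k) then (if Rle_dec (u k) hi then 0 else 1) else 1).

(* Main.v *)
Require Import Defs.
From Stdlib Require Import Reals List Arith Lra Lia Psatz FunctionalExtensionality.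
Open Scope R_scope.

Lemma fsum_ext n f g : (forall k, (k < n)%nat -> f k = g k) -> fsum n f = fsum n g.
Proof. induction n; simpl; intros H; auto. rewrite IHn by (intros; apply H; lia). rewrite H by lia; auto. Qed.
Lemma fsum_plus n f g : fsum n (fun k => f k + g k) = fsum n f + fsum n g.
Proof. induction n; simpl; [lra|]. rewrite IHn; lra. Qed.
Lemma fsum_minus n f g : fsum n (fun k => f k - g k) = fsum n f - fsum n g.
Proof. induction n; simpl; [lra|]. rewrite IHn; lra. Qed.
Lemma fsum_scal n c f : fsum n (fun k => c * f k) = c * fsum n f.
Proof. induction n; simpl; [lra|]. rewrite IHn; lra. Qed.
Lemma fsum_const n c : fsum n (fun _ => c) = INR n * c.
Proof. induction n; simpl fsum; [simpl; lra|]. rewrite IHn, S_INR; lra. Qed.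
Lemma fsum_le n f g : (forall k, (k < n)%nat -> f k <= g k) -> fsum n f <= fsum n g.
Proof. induction n; simpl; intros H; [lra|]. assert (f n <= g n) by (apply H; lia).
 assert (fsum n f <= fsum n g) by (apply IHn; intros; apply H; lia). lra. Qed.
Lemma fsum_nonneg n f : (forall k, (k < n)%nat -> 0 <= f k) -> 0 <= fsum n f.
Proof. intros H. replace 0 with (fsum n (fun _ => 0)). apply fsum_le; auto.
 rewrite fsum_const; lra. Qed.
Lemma fsum_swap n m (F : nat -> nat -> R) :
  fsum n (fun i => fsum m (fun k => F i k)) = fsum m (fun k => fsum n (fun i => F i k)).
Proof. induction n; simpl.
 - symmetry. transitivity (fsum m (fun _ => 0)). apply fsum_ext; auto. rewrite fsum_const; ring.
 - rewrite IHn, <- fsum_plus; auto. Qed.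
Lemma fsum_add p q F : fsum (p + q) F = fsum p F + fsum q (fun a => F (p + a)%nat).
Proof. induction q; simpl. rewrite Nat.add_0_r; lra.
 rewrite Nat.add_succ_r; simpl. rewrite IHq; lra. Qed.
Lemma fsum_nested N B F : fsum N (fun i => fsum B (fun a => F (i * B + a)%nat)) = fsum (N * B) F.
Proof. induction N; simpl; auto. rewrite IHN. rewrite Nat.add_comm, fsum_add. auto. Qed.
Lemma fsum_mul n m a b : fsum n a * fsum m b = fsum n (fun j => fsum m (fun j' => a j * b j')).
Proof. induction n; simpl; [lra|]. rewrite <- IHn, fsum_scal; lra. Qed.
Lemma fsum_delta m j V : (j < m)%nat -> fsum m (fun j' => if Nat.eqb j j' then V else 0) = V.
Proof. induction m; intros; [lia|]. simpl. destruct (Nat.eqb_spec j m).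
 - subst. rewrite (fsum_ext _ _ (fun _ => 0)). rewrite fsum_const; lra.
   intros k Hk. destruct (Nat.eqb_spec m k); [lia|auto].
 - rewrite IHm by lia. lra. Qed.

Lemma CS2 n a b : (fsum n (fun k => a k * b k))^2 <= fsum n (fun k => a k ^ 2) * fsum n (fun k => b k ^ 2).
Proof. induction n; simpl; [lra|].
 set (S := fsum n (fun k => a k * b k)) in *. set (A := fsum n (fun k => a k ^ 2)) in *.
 set (B := fsum n (fun k => b k ^ 2)) in *.
 assert (HA : 0 <= A) by (apply fsum_nonneg; intros; nra).
 assert (HB : 0 <= B) by (apply fsum_nonneg; intros; nra).
 assert (2 * S * (a n * b n) <= A * b n ^ 2 + B * a n ^ 2).
 { destruct (Req_dec A 0) as [H0|H0].
   - assert (HS : S = 0) by (rewrite H0 in IHn; nra). rewrite HS, H0; nra.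
   - assert (0 < A) by lra.
     assert (A * (A * b n ^ 2 + B * a n ^ 2 - 2 * S * (a n * b n)) >= 0).
     { replace (A * (A * b n ^ 2 + B * a n ^ 2 - 2 * S * (a n * b n))) with
        ((A * b n - S * a n)^2 + (A * B - S^2) * a n ^ 2) by ring.
       apply Rle_ge, Rplus_le_le_0_compat; [apply pow2_ge_0|]. apply Rmult_le_pos; [lra|apply pow2_ge_0]. }
     nra. }
 match goal with |- ?l <= ?r => assert (r - l = (A*B - S^2) + (A * b n ^ 2 + B * a n ^ 2 - 2 * S * (a n * b n))) by (unfold S, A, B; simpl; ring) end.
 lra. Qed.

Definition nsq d (u : nat -> R) := fsum d (fun k => u k ^ 2).
Lemma nsq_nonneg d u : 0 <= nsq d u.
Proof. apply fsum_nonneg; intros; nra. Qed.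
Lemma norm_sq d u : norm d u ^ 2 = nsq d u.
Proof. unfold norm; rewrite pow2_sqrt; auto. apply nsq_nonneg. Qed.
Lemma norm_nonneg d u : 0 <= norm d u.
Proof. apply sqrt_pos. Qed.

Lemma CS d u v : inner d u v <= norm d u * norm d v.
Proof. pose proof (CS2 d u v) as H. fold (nsq d u) (nsq d v) in H.
 unfold inner. rewrite <- !norm_sq in H.
 pose proof (norm_nonneg d u); pose proof (norm_nonneg d v).
 set (s := fsum d (fun k => u k * v k)) in *.
 destruct (Rle_dec s 0). assert (0 <= norm d u * norm d v) by (apply Rmult_le_pos; auto). lra.
 assert (s^2 <= (norm d u * norm d v)^2) by nra.
 destruct (Rle_dec s (norm d u * norm d v)); auto.
 assert (0 <= norm d u * norm d v) by (apply Rmult_le_pos; auto).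
 assert (0 < (s - norm d u * norm d v) * (s + norm d u * norm d v)) by (apply Rmult_lt_0_compat; lra).
 nra. Qed.

Lemma jensen n e : (fsum n e)^2 <= INR n * fsum n (fun k => e k ^ 2).
Proof. pose proof (CS2 n e (fun _ => 1)) as H. cbv beta in H.
 rewrite (fsum_ext n (fun k => e k * 1) e) in H by (intros; ring).
 rewrite (fsum_ext n (fun k => 1 ^ 2) (fun _ => 1)), fsum_const in H by (intros; ring). lra. Qed.

Lemma norm_scal d t p : norm d (fun k => t * p k) = Rabs t * norm d p.
Proof. unfold norm. rewrite (fsum_ext d _ (fun k => t^2 * p k ^2)) by (intros; ring).
 rewrite fsum_scal, sqrt_mult_alt by nra. f_equal. rewrite <- sqrt_Rsqr_abs. unfold Rsqr. f_equal; ring. Qed.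

Lemma ninf_nonneg d u : 0 <= ninf d u.
Proof. induction d; simpl; [lra|]. apply Rle_trans with (ninf d u); auto. apply Rmax_l. Qed.
Lemma ninf_coord d u k : (k < d)%nat -> Rabs (u k) <= ninf d u.
Proof. induction d; intros; [lia|]. simpl. destruct (Nat.eq_dec k d).
 subst; apply Rmax_r. apply Rle_trans with (ninf d u). apply IHd; lia. apply Rmax_l. Qed.
Lemma ninf_nsq d u : ninf d u ^ 2 <= nsq d u.
Proof. induction d; unfold nsq in *; cbn [ninf fsum]; [lra|].
 pose proof (ninf_nonneg d u).
 assert (0 <= fsum d (fun k => u k ^ 2)) by (apply fsum_nonneg; intros; apply pow2_ge_0).
 assert (Rabs (u d) ^2 = u d ^2) by apply pow2_abs.
 pose proof (Rabs_pos (u d)). pose proof (pow2_ge_0 (u d)).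
 unfold Rmax. destruct (Rle_dec (ninf d u) (Rabs (u d))); lra. Qed.

Definition Ex {A : Type} (l : list (A * R)) (phi : A -> R) : R :=
  fold_right Rplus 0 (map (fun aw => snd aw * phi (fst aw)) l).

Section EX.
Context {A : Type}.
Lemma Ex_ext (l : list (A*R)) f g : (forall a, f a = g a) -> Ex l f = Ex l g.
Proof. intros H; induction l; simpl; auto. unfold Ex in *; simpl. rewrite IHl, H; auto. Qed.
Lemma Ex_plus (l : list (A*R)) f g : Ex l (fun a => f a + g a) = Ex l f + Ex l g.
Proof. induction l; unfold Ex in *; simpl; [lra|]. rewrite IHl; lra. Qed.
Lemma Ex_scal (l : list (A*R)) c f : Ex l (fun a => c * f a) = c * Ex l f.
Proof. induction l; unfold Ex in *; simpl; [lra|]. rewrite IHl; lra. Qed.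
Lemma Ex_scalr (l : list (A*R)) c f : Ex l (fun a => f a * c) = Ex l f * c.
Proof. induction l; unfold Ex in *; simpl; [lra|]. rewrite IHl; lra. Qed.
Lemma Ex_const (l : list (A*R)) c : Ex l (fun _ => c) = c * Ex l (fun _ => 1).
Proof. induction l; unfold Ex in *; simpl; [lra|]. rewrite IHl; lra. Qed.
Lemma Ex_mono (l : list (A*R)) (P : A -> Prop) f g :
  (forall aw, In aw l -> P (fst aw) /\ 0 <= snd aw) -> (forall a, P a -> f a <= g a) -> Ex l f <= Ex l g.
Proof. intros H1 H2; induction l; unfold Ex in *; simpl; [lra|].
 destruct (H1 a) as [Ha Hw]; [left; auto|].
 assert (fold_right Rplus 0 (map (fun aw => snd aw * f (fst aw)) l) <=
         fold_right Rplus 0 (map (fun aw => snd aw * g (fst aw)) l)) by (apply IHl; intros; apply H1; right; auto).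
 pose proof (H2 _ Ha). nra. Qed.
End EX.

Section EPROD.
Context {A : Type} (a0 : A).

Lemma Eprod_S m D F : Eprod a0 (S m) D F = Eprod a0 m D (fun s => Ex (D m) (fun a => F (upd s m a))).
Proof. reflexivity. Qed.

Lemma E_ext m D F G : (forall s, F s = G s) -> Eprod a0 m D F = Eprod a0 m D G.
Proof. revert F G; induction m; intros F G H; [simpl|rewrite !Eprod_S]; auto. apply IHm. intros s.
 apply (Ex_ext (D m) (fun a => F (upd s m a))). intros; auto. Qed.
Lemma E_plus m D F G : Eprod a0 m D (fun s => F s + G s) = Eprod a0 m D F + Eprod a0 m D G.
Proof. revert F G; induction m; intros F G; [simpl|rewrite !Eprod_S]; auto. rewrite <- IHm. apply E_ext. intros s.
 apply (Ex_plus (D m) (fun a => F (upd s m a))). Qed.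
Lemma E_scal m D c F : Eprod a0 m D (fun s => c * F s) = c * Eprod a0 m D F.
Proof. revert F; induction m; intros F; [simpl|rewrite !Eprod_S]; auto. rewrite <- IHm. apply E_ext. intros s.
 apply (Ex_scal (D m) c (fun a => F (upd s m a))). Qed.
Lemma E_minus m D F G : Eprod a0 m D (fun s => F s - G s) = Eprod a0 m D F - Eprod a0 m D G.
Proof. unfold Rminus. rewrite E_plus. rewrite (E_ext _ _ (fun s => - G s) (fun s => (-1) * G s)) by (intros; ring).
 rewrite E_scal; ring. Qed.
Lemma E_zero m D : Eprod a0 m D (fun _ => 0) = 0.
Proof. rewrite (E_ext _ _ _ (fun s => 0 * 0)) by (intros; ring). rewrite E_scal; ring. Qed.
Lemma E_fsum m D K (F : nat -> (nat -> A) -> R) :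
  Eprod a0 m D (fun s => fsum K (fun k => F k s)) = fsum K (fun k => Eprod a0 m D (F k)).
Proof. induction K; simpl. apply E_zero. rewrite E_plus, IHK; auto. Qed.


Lemma E_const m D c : (forall j, Ex (D j) (fun _ => 1) = 1) -> Eprod a0 m D (fun _ => c) = c.
Proof. intros H; induction m; [simpl; auto|rewrite !Eprod_S]. transitivity (Eprod a0 m D (fun _ => c)); auto. apply E_ext. intros s.
 rewrite Ex_const, H; ring. Qed.
Lemma E_mono m D (P : A -> Prop) F G :
  P a0 -> (forall j aw, In aw (D j) -> P (fst aw) /\ 0 <= snd aw) ->
  (forall s, (forall j, P (s j)) -> F s <= G s) -> Eprod a0 m D F <= Eprod a0 m D G.
Proof. intros H0 HD; revert F G; induction m; intros F G H; [simpl; apply H; auto|rewrite !Eprod_S].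
 apply IHm. intros s Hs. apply (Ex_mono (D m) P). apply HD.
 intros a Ha. apply H. intros j. unfold upd. destruct (Nat.eqb j m); auto. Qed.

Lemma E_marg1 m D j (phi : A -> R) : (forall j, Ex (D j) (fun _ => 1) = 1) -> (j < m)%nat ->
  Eprod a0 m D (fun s => phi (s j)) = Ex (D j) phi.
Proof. intros H; induction m; intros Hj; [lia|]. rewrite !Eprod_S. destruct (Nat.eq_dec j m).
 - subst. rewrite <- (E_const m D (Ex (D m) phi) H). apply E_ext. intros s.
   apply Ex_ext. intros a. unfold upd. rewrite Nat.eqb_refl. auto.
 - rewrite <- IHm by lia. apply E_ext. intros s.
   rewrite (Ex_ext _ _ (fun _ => phi (s j))). rewrite Ex_const, H; ring.
   intros a; unfold upd. destruct (Nat.eqb_spec j m); [lia|auto]. Qed.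

Lemma E_marg2 m D j j' (phi psi : A -> R) : (forall j, Ex (D j) (fun _ => 1) = 1) ->
  (j < m)%nat -> (j' < m)%nat -> j <> j' ->
  Eprod a0 m D (fun s => phi (s j) * psi (s j')) = Ex (D j) phi * Ex (D j') psi.
Proof. intros H; induction m; intros Hj Hj' Hne; [lia|]. rewrite !Eprod_S. destruct (Nat.eq_dec j m).
 - subst j. rewrite <- E_marg1 with (m := m) (j := j') (phi := psi) by (auto; lia). rewrite <- E_scal.
   apply E_ext. intros s. rewrite (Ex_ext _ _ (fun a => phi a * psi (s j'))).
   rewrite Ex_scalr. ring.
   intros a; unfold upd. rewrite Nat.eqb_refl. destruct (Nat.eqb_spec j' m); [lia|auto].
 - destruct (Nat.eq_dec j' m).
   + subst j'. rewrite <- E_marg1 with (m := m) (j := j) (phi := phi) by (auto; lia). rewrite Rmult_comm, <- E_scal.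
     apply E_ext. intros s. rewrite (Ex_ext _ _ (fun a => phi (s j) * psi a)).
     rewrite Ex_scal. ring.
     intros a; unfold upd. rewrite Nat.eqb_refl. destruct (Nat.eqb_spec j m); [lia|auto].
   + rewrite <- IHm by lia. apply E_ext. intros s.
     rewrite (Ex_ext _ _ (fun _ => phi (s j) * psi (s j'))). rewrite Ex_const, H; ring.
     intros a; unfold upd. destruct (Nat.eqb_spec j m); [lia|]. destruct (Nat.eqb_spec j' m); [lia|auto]. Qed.
End EPROD.

Lemma Ex_app {A} (l1 l2 : list (A*R)) f : Ex (l1 ++ l2) f = Ex l1 f + Ex l2 f.
Proof. induction l1; unfold Ex in *; simpl; [lra|]. rewrite IHl1; lra. Qed.

Lemma Ex_seq c n f : Ex (map (fun a : nat => (a, c)) (seq 0 n)) f = c * fsum n f.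
Proof. induction n. unfold Ex; simpl; lra.
 rewrite seq_S, map_app, Ex_app, IHn. unfold Ex; simpl. lra. Qed.

Lemma Ex_unif n f : Ex (Dunif n) f = / INR n * fsum n f.
Proof. apply Ex_seq. Qed.

Lemma unif_sum1 n : (1 <= n)%nat -> Ex (Dunif n) (fun _ => 1) = 1.
Proof. intros H. rewrite Ex_unif, fsum_const. field. apply not_0_INR; lia. Qed.

Lemma unif_supp n : forall (j : nat) aw, In aw (Dunif n) -> (fst aw < n)%nat /\ 0 <= snd aw.
Proof. intros j aw H. unfold Dunif in H. apply in_map_iff in H. destruct H as [a [<- Ha]].
 apply in_seq in Ha. simpl. split; [lia|]. destruct n. lia. left; apply Rinv_0_lt_compat, lt_0_INR; lia. Qed.

Lemma var_mean n m (phi : nat -> R) : (1 <= n)%nat -> (1 <= m)%nat ->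
  Eprod 0%nat m (fun _ => Dunif n)
    (fun s => (/ INR m * fsum m (fun j => phi (s j)) - / INR n * fsum n phi) ^ 2)
  <= / INR m * (/ INR n * fsum n (fun c => phi c ^ 2)).
Proof. intros Hn Hm. set (mu := / INR n * fsum n phi).
 assert (Hm0 : INR m <> 0) by (apply not_0_INR; lia).
 assert (Hn0 : INR n <> 0) by (apply not_0_INR; lia).
 assert (Hs1 : forall j : nat, Ex ((fun _ => Dunif n) j) (fun _ => 1) = 1) by (intros; apply unif_sum1; auto).
 rewrite (E_ext _ _ _ _ (fun s => / INR m * / INR m *
     fsum m (fun j => fsum m (fun j' => (phi (s j) - mu) * (phi (s j') - mu))))).
 2:{ intros s. rewrite <- fsum_mul, fsum_minus, fsum_const. field_simplify; auto. }
 rewrite E_scal, E_fsum.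
 rewrite (fsum_ext m _ (fun j => Ex (Dunif n) (fun c => (phi c - mu)^2))).
 2:{ intros j Hj. rewrite E_fsum.
   rewrite (fsum_ext m _ (fun j' => if Nat.eqb j j' then Ex (Dunif n) (fun c => (phi c - mu)^2) else 0)).
   apply fsum_delta; auto.
   intros j' Hj'. destruct (Nat.eqb_spec j j').
   - subst j'. rewrite (E_ext _ _ _ _ (fun s => (fun c => (phi c - mu)^2) (s j))) by (intros; simpl; ring).
     rewrite (E_marg1 0%nat m (fun _ => Dunif n) j (fun c => (phi c - mu)^2)); auto.
   - rewrite (E_marg2 0%nat m (fun _ => Dunif n) j j' (fun c => phi c - mu) (fun c => phi c - mu)); auto.
     rewrite Ex_unif, fsum_minus, fsum_const. unfold mu. field_simplify; auto. unfold Rdiv; ring. }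
 rewrite fsum_const, Ex_unif.
 assert (fsum n (fun c => (phi c - mu)^2) = fsum n (fun c => phi c ^ 2) - INR n * mu^2).
 { rewrite (fsum_ext n _ (fun c => phi c ^ 2 + ((-2*mu) * phi c + mu^2))) by (intros; ring).
   rewrite fsum_plus, fsum_plus, fsum_scal, fsum_const. unfold mu. field. auto. }
 rewrite H. 
 assert (0 < / INR n) by (apply Rinv_0_lt_compat, lt_0_INR; lia).
 assert (0 < / INR m) by (apply Rinv_0_lt_compat, lt_0_INR; lia).
 assert (0 <= INR n * mu^2) by (apply Rmult_le_pos; [apply pos_INR|apply pow2_ge_0]).
 replace (/ INR m * / INR m * (INR m * (/ INR n * (fsum n (fun c => phi c ^ 2) - INR n * mu ^ 2))))
   with (/ INR m * (/ INR n * (fsum n (fun c => phi c ^ 2) - INR n * mu ^ 2))) by (field; auto).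
 apply Rmult_le_compat_l; [lra|]. apply Rmult_le_compat_l; lra. Qed.

Lemma M_ge2 b : (2 <= b)%nat -> 2 <= 2 ^ (b - 1).
Proof. intros H. replace (b - 1)%nat with (S (b - 2)) by lia. simpl.
 pose proof (pow_R1_Rle 2 (b-2)). lra. Qed.

Lemma qdelta_nonneg d lam b u : 0 < lam -> (2 <= b)%nat -> 0 <= qdelta d lam b u.
Proof. intros Hl Hb. unfold qdelta. pose proof (M_ge2 b Hb). pose proof (ninf_nonneg d u).
 apply Rmult_le_pos. apply Rmult_le_pos; lra. left; apply Rinv_0_lt_compat; lra. Qed.

Lemma qdist_sum1 delta b y : Ex (qdist delta b y) (fun _ => 1) = 1.
Proof. unfold qdist. destruct (Req_EM_T delta 0). unfold Ex; simpl; lra.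
 destruct (Rle_dec _ y); [destruct (Rle_dec y _)|]; unfold Ex; simpl; try lra. field; auto. Qed.

Lemma Int_bounds delta y : 0 < delta ->
  IZR (Int_part (y / delta)) * delta <= y < IZR (Int_part (y / delta)) * delta + delta.
Proof. intros H. destruct (base_Int_part (y / delta)) as [H1 H2].
 set (q := IZR (Int_part (y / delta))) in *.
 assert (y = (y / delta) * delta) by (field; lra). split; nra. Qed.

Lemma qdist_supp delta b y : 0 <= delta -> forall aw, In aw (qdist delta b y) -> True /\ 0 <= snd aw.
Proof. intros Hd aw Hin. split; auto. unfold qdist in Hin. destruct (Req_EM_T delta 0).
 simpl in Hin; destruct Hin as [<-|[]]; simpl; lra.
 assert (0 < delta) by lra. pose proof (Int_bounds delta y H) as [H1 H2].
 destruct (Rle_dec _ y); [destruct (Rle_dec y _)|]; simpl in Hin.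
 - destruct Hin as [<-|[<-|[]]]; simpl; unfold Rdiv; apply Rmult_le_pos; try lra; left; apply Rinv_0_lt_compat; lra.
 - destruct Hin as [<-|[]]; simpl; lra.
 - destruct Hin as [<-|[]]; simpl; lra. Qed.

Definition outind (lo hi y : R) : R := if Rle_dec lo y then (if Rle_dec y hi then 0 else 1) else 1.

Lemma q_var d lam b u k : 0 < lam <= 1 -> (2 <= b)%nat -> (k < d)%nat ->
  Ex (qdist (qdelta d lam b u) b (u k)) (fun a => (a - u k) ^ 2) <=
  qdelta d lam b u ^ 2 / 4 +
  outind (- 2 ^ (b - 1) * qdelta d lam b u) ((2 ^ (b - 1) - 1) * qdelta d lam b u) (u k)
    * ((1 - lam) ^ 2 * ninf d u ^ 2).
Proof. intros Hl Hb Hk. pose proof (M_ge2 b Hb) as HM.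
 pose proof (ninf_nonneg d u) as Hnu. pose proof (ninf_coord d u k Hk) as Hy.
 pose proof (qdelta_nonneg d lam b u (proj1 Hl) Hb) as Hd0.
 assert (Hdl : (2 ^ (b - 1) - 1) * qdelta d lam b u = lam * ninf d u).
 { unfold qdelta. field. lra. }
 unfold outind, qdist.
 set (M := 2 ^ (b - 1)) in *. set (delta := qdelta d lam b u) in *. set (nu := ninf d u) in *.
 set (y := u k) in *.
 assert (H1l : 0 <= (1 - lam)) by lra.
 assert (0 <= (1 - lam) ^ 2 * nu ^ 2) by (apply Rmult_le_pos; apply pow2_ge_0).
 assert (0 <= delta ^ 2 / 4) by (pose proof (pow2_ge_0 delta); lra).
 destruct (Req_EM_T delta 0) as [E|E].
 - assert (lam * nu = 0) by (rewrite <- Hdl, E; ring).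
   assert (nu = 0) by (destruct (Rmult_integral _ _ H1); lra).
   assert (y = 0) by (rewrite H2 in Hy; unfold Rabs in Hy; destruct (Rcase_abs y); lra).
   unfold Ex; simpl. rewrite H3.
   destruct (Rle_dec _ 0); [destruct (Rle_dec 0 _)|]; lra.
 - assert (Hdp : 0 < delta) by lra. pose proof (Int_bounds delta y Hdp) as [Hz1 Hz2].
   destruct (Rle_dec _ y) as [Hlo|Hlo]; [destruct (Rle_dec y _) as [Hhi|Hhi]|]; unfold Ex; simpl.
   + set (z := IZR (Int_part (y / delta)) * delta) in *.
     match goal with |- ?l <= _ => replace l with ((y-z)*(z+delta-y)) by (field; lra) end.
     assert (0 <= (delta - 2*(y-z))^2) by apply pow2_ge_0. nra.
   + assert (Hyb : - nu <= y <= nu) by (unfold Rabs in Hy; destruct (Rcase_abs y); lra).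
     assert (0 <= y - lam * nu <= (1 - lam) * nu) by lra.
     assert ((y - lam*nu)^2 <= ((1-lam)*nu)^2) by (apply pow_incr; lra).
     rewrite Hdl. 
     match goal with |- ?l <= _ => replace l with ((y - lam*nu)^2) by ring end. nra.
   + assert (Hyb : - nu <= y <= nu) by (unfold Rabs in Hy; destruct (Rcase_abs y); lra).
     assert (0 <= - M * delta - y <= (1 - lam) * nu) by lra.
     assert ((- M * delta - y)^2 <= ((1-lam)*nu)^2) by (apply pow_incr; lra).
     match goal with |- ?l <= _ => replace l with ((- M * delta - y)^2) by ring end. nra.
Qed.

Lemma norm_ext d u v : (forall k, (k < d)%nat -> u k = v k) -> norm d u = norm d v.
Proof. intros H; unfold norm; f_equal; apply fsum_ext; intros; rewrite H; auto. Qed.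
Lemma inner_ext d u v u' v' : (forall k, (k < d)%nat -> u k * v k = u' k * v' k) -> inner d u v = inner d u' v'.
Proof. intros H; unfold inner; apply fsum_ext; auto. Qed.

Lemma grad_ineq d f g : convex_on f -> has_gradient d f g ->
  forall x z, f x + inner d (g x) (vsub z x) <= f z.
Proof. intros Hc Hg x z. set (p := vsub z x). set (P := norm d p).
 pose proof (norm_nonneg d p) as HP. fold P in HP.
 destruct (Rle_dec (f x + inner d (g x) p) (f z)) as [ok|nok]; auto. exfalso.
 set (c := f x + inner d (g x) p - f z). assert (Hc0 : 0 < c) by (unfold c; lra).
 set (eps := c / (2 * (P + 1))).
 assert (He : 0 < eps) by (unfold eps; apply Rdiv_lt_0_compat; lra).
 destruct (Hg x eps He) as [delta [Hd Hfr]].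
 set (t := Rmin 1 (delta / (2 * (P + 1)))).
 assert (Ht0 : 0 < t) by (unfold t; apply Rmin_glb_lt; [lra| apply Rdiv_lt_0_compat; lra]).
 assert (Ht1 : t <= 1) by apply Rmin_l.
 assert (Ht2 : t <= delta / (2 * (P + 1))) by apply Rmin_r.
 set (y := fun k => t * z k + (1 - t) * x k).
 assert (Hny : norm d (vsub y x) = t * P).
 { rewrite (norm_ext d _ (fun k => t * p k)). rewrite norm_scal, Rabs_pos_eq; auto; lra.
   intros; unfold vsub, y, p, vsub; ring. }
 assert (Hiy : inner d (g x) (vsub y x) = t * inner d (g x) p).
 { unfold inner. rewrite <- fsum_scal. apply fsum_ext; intros; unfold vsub, y, p, vsub; ring. }
 assert (HtP : t * P < delta).
 { assert (t * (2 * (P + 1)) <= delta).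
   { apply Rmult_le_reg_r with (/ (2 * (P+1))). apply Rinv_0_lt_compat; lra.
     replace (t * (2 * (P + 1)) * / (2 * (P + 1))) with t by (field; lra). auto. }
   nra. }
 specialize (Hfr y). rewrite Hny, Hiy in Hfr. specialize (Hfr HtP).
 pose proof (Hc z x t (conj (Rlt_le _ _ Ht0) Ht1)) as Hcv. fold y in Hcv.
 assert (HA : - (eps * (t * P)) <= f y - f x - t * inner d (g x) p).
 { unfold Rabs in Hfr; destruct (Rcase_abs _) in Hfr; try lra.
   all: assert (0 <= eps * (t * P)) by (apply Rmult_le_pos; [lra| apply Rmult_le_pos; lra]); lra. }
 assert (t * c <= t * (eps * P)).
 { unfold c. replace (t * (f x + inner d (g x) p - f z)) with (t * f x + t * inner d (g x) p - t * f z) by ring.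
   replace (t * (eps * P)) with (eps * (t * P)) by ring. lra. }
 assert (c <= eps * P) by (apply Rmult_le_reg_l with t; auto).
 assert (eps * P < c).
 { unfold eps. apply Rmult_lt_reg_r with (2 * (P + 1)). lra.
   replace (c / (2 * (P + 1)) * P * (2 * (P + 1))) with (c * P) by (field; lra). nra. }
 lra. Qed.

Lemma deriv_line d f g x p t : has_gradient d f g ->
  derivable_pt_lim (fun t => f (fun k => x k + t * p k)) t
    (inner d (g (fun k => x k + t * p k)) p).
Proof. intros Hg eps He. set (q := fun k => x k + t * p k). set (P := norm d p).
 pose proof (norm_nonneg d p) as HP; fold P in HP.
 set (e' := eps / (2 * (P + 1))).
 assert (He' : 0 < e') by (unfold e'; apply Rdiv_lt_0_compat; lra).
 destruct (Hg q e' He') as [dl [Hdl Hfr]].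
 assert (Hpos : 0 < dl / (P + 1)) by (apply Rdiv_lt_0_compat; lra).
 exists (mkposreal _ Hpos). simpl. intros h Hh0 Hh. cbv beta. fold q.
 set (y := fun k => x k + (t + h) * p k).
 assert (Hn : norm d (vsub y q) = Rabs h * P).
 { rewrite (norm_ext d _ (fun k => h * p k)). apply norm_scal. intros; unfold vsub, y, q; ring. }
 assert (Hi : inner d (g q) (vsub y q) = h * inner d (g q) p).
 { unfold inner. rewrite <- fsum_scal. apply fsum_ext; intros; unfold vsub, y, q; ring. }
 assert (Hah : 0 < Rabs h) by (apply Rabs_pos_lt; auto).
 assert (HhP : Rabs h * P < dl).
 { assert (Rabs h * (P + 1) < dl).
   { apply Rmult_lt_reg_r with (/ (P+1)). apply Rinv_0_lt_compat; lra.
     replace (Rabs h * (P + 1) * / (P + 1)) with (Rabs h) by (field; lra). auto. }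
   nra. }
 specialize (Hfr y). rewrite Hn, Hi in Hfr. specialize (Hfr HhP).

 set (A := f y - f q).
 replace (A / h - inner d (g q) p) with ((A - h * inner d (g q) p) * / h) by (field; auto).
 rewrite Rabs_mult, Rabs_inv.
 apply Rle_lt_trans with (e' * (Rabs h * P) * / Rabs h).
 apply Rmult_le_compat_r. left; apply Rinv_0_lt_compat; auto. unfold A. auto.
 replace (e' * (Rabs h * P) * / Rabs h) with (e' * P) by (field; lra).
 unfold e'. apply Rmult_lt_reg_r with (2 * (P + 1)). lra.
 replace (eps / (2 * (P + 1)) * P * (2 * (P + 1))) with (eps * P) by (field; lra). nra. Qed.

Lemma descent d f g L : has_gradient d f g -> 0 <= L ->
  (forall y z, norm d (vsub (g y) (g z)) <= L * norm d (vsub y z)) ->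
  forall x y, f y <= f x + inner d (g x) (vsub y x) + L / 2 * norm d (vsub y x) ^ 2.
Proof. intros Hg HL Hlip x y. set (p := vsub y x). set (P := norm d p).
 pose proof (norm_nonneg d p) as HP; fold P in HP.
 set (I0 := inner d (g x) p).
 set (F := fun t => f (fun k => x k + t * p k)).
 set (Q := plus_fct (mult_real_fct I0 id) (mult_real_fct (L / 2 * P ^ 2) Rsqr)).
 set (h := minus_fct F Q).
 set (l := fun t => inner d (g (fun k => x k + t * p k)) p - (I0 * 1 + L / 2 * P ^ 2 * (2 * t))).
 assert (Hd : forall t, derivable_pt_lim h t (l t)).
 { intros t. apply derivable_pt_lim_minus. apply deriv_line; auto.
   apply derivable_pt_lim_plus; apply derivable_pt_lim_scal. apply derivable_pt_lim_id. apply derivable_pt_lim_Rsqr. }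
 set (pr := fun t => exist (fun l0 => derivable_pt_abs h t l0) (l t) (Hd t) : derivable_pt h t).
 destruct (MVT_cor1 h 0 1 pr Rlt_0_1) as [c [Hc Hc01]].
 rewrite (derive_pt_eq_0 h c (l c) (pr c) (Hd c)) in Hc.
 assert (Hlc : l c <= 0).
 { unfold l. set (q := fun k => x k + c * p k).
   assert (inner d (g q) p - I0 = inner d (vsub (g q) (g x)) p).
   { unfold I0, inner. rewrite <- fsum_minus. apply fsum_ext; intros; unfold vsub; ring. }
   assert (Hcs := CS d (vsub (g q) (g x)) p). fold P in Hcs.
   assert (Hl := Hlip q x).
   assert (norm d (vsub q x) = c * P).
   { rewrite (norm_ext d _ (fun k => c * p k)). rewrite norm_scal, Rabs_pos_eq; auto; lra.
     intros; unfold vsub, q; ring. }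
   pose proof (norm_nonneg d (vsub (g q) (g x))).
   assert (norm d (vsub (g q) (g x)) * P <= L * (c * P) * P) by (apply Rmult_le_compat_r; auto; congruence).
   assert (Heq : L / 2 * P ^ 2 * (2 * c) = L * (c * P) * P)  by field. rewrite Heq. lra. }
 assert (Hh : h 1 - h 0 <= 0) by (rewrite Hc; nra).
 unfold h, minus_fct, Q, plus_fct, mult_real_fct, id, Rsqr, F in Hh.
 replace (fun k => x k + 1 * p k) with y in Hh by (apply functional_extensionality; intros; unfold p, vsub; ring).
 replace (fun k => x k + 0 * p k) with x in Hh by (apply functional_extensionality; intros; ring).
 fold I0. fold P. lra. Qed.

Lemma cocoercive d f g L : convex_on f -> has_gradient d f g -> 0 <= L ->
  (forall y z, norm d (vsub (g y) (g z)) <= L * norm d (vsub y z)) ->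
  forall x y, nsq d (vsub (g x) (g y)) <= 2 * L * (f y - f x - inner d (g x) (vsub y x)).
Proof. intros Hc Hg HL Hlip x y.
 set (D := fun k => g y k - g x k).
 assert (HN : nsq d (vsub (g x) (g y)) = nsq d D) by (unfold nsq; apply fsum_ext; intros; unfold D, vsub; ring).
 rewrite HN.
 destruct (Req_dec L 0) as [L0|L0].
 - assert (norm d (vsub (g y) (g x)) <= 0) by (pose proof (Hlip y x); rewrite L0 in H; lra).
   pose proof (norm_nonneg d (vsub (g y) (g x))).
   assert (norm d (vsub (g y) (g x)) = 0) by lra.
   rewrite <- norm_sq. rewrite (norm_ext d D (vsub (g y) (g x))), H1 by (intros; unfold D, vsub; auto).
   rewrite L0. lra.
 - assert (HLp : 0 < L) by lra.
   set (z := fun k => y k - / L * D k).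
   pose proof (grad_ineq d f g Hc Hg x z) as G1.
   pose proof (descent d f g L Hg HL Hlip y z) as G2.
   set (Sx := fsum d (fun k => g x k * D k)). set (Sy := fsum d (fun k => g y k * D k)).
   assert (E1 : inner d (g x) (vsub z x) = inner d (g x) (vsub y x) - / L * Sx).
   { unfold inner, Sx. rewrite <- fsum_scal, <- fsum_minus. apply fsum_ext; intros; unfold z, vsub; ring. }
   assert (E2 : inner d (g y) (vsub z y) = - / L * Sy).
   { unfold inner, Sy. rewrite <- fsum_scal. apply fsum_ext; intros; unfold z, vsub; ring. }
   assert (E3 : norm d (vsub z y) ^ 2 = / L ^ 2 * nsq d D).
   { rewrite norm_sq. unfold nsq. rewrite <- fsum_scal. apply fsum_ext; intros; unfold z, vsub; field; auto. }
   assert (E4 : Sy - Sx = nsq d D).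
   { unfold Sx, Sy, nsq. rewrite <- fsum_minus. apply fsum_ext; intros; unfold D; ring. }
   rewrite E1 in G1. rewrite E2, E3 in G2.
   set (N := nsq d D) in *.
   assert (H : / L * N - / 2 * / L * N <= f y - f x - inner d (g x) (vsub y x)).
   { replace (/ 2 * / L * N) with (L / 2 * (/ L ^ 2 * N)) by (field; auto).
     replace (/ L * N) with (/ L * Sy - / L * Sx) by (rewrite <- E4; ring). lra. }
   replace (/ L * N - / 2 * / L * N) with (N / (2 * L)) in H by (field; auto).
   apply Rmult_le_reg_r with (/ (2 * L)). apply Rinv_0_lt_compat; lra.
   replace (2 * L * (f y - f x - inner d (g x) (vsub y x)) * / (2 * L)) with (f y - f x - inner d (g x) (vsub y x)) by (field; auto).
   unfold Rdiv in H. auto. Qed.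

Lemma grad_d0 f g : has_gradient 0 f g -> forall y z, f y = f z.
Proof. intros Hg y z. destruct (Hg z 1 Rlt_0_1) as [dl [Hd H]].
 assert (Hn : forall u, norm 0 u = 0) by (intros; unfold norm; simpl; apply sqrt_0).
 specialize (H y). rewrite Hn in H. specialize (H Hd). unfold inner in H; simpl in H.
 unfold Rabs in H; destruct (Rcase_abs _) in H; lra. Qed.

Lemma coco_i d f g L : convex_on f -> has_gradient d f g ->
  (forall y z, norm d (vsub (g y) (g z)) <= L * norm d (vsub y z)) ->
  forall x y, nsq d (vsub (g x) (g y)) <= 2 * L * (f y - f x - inner d (g x) (vsub y x)).
Proof. intros Hc Hg Hl x y. destruct d.
 - rewrite (grad_d0 f g Hg y x). unfold nsq, inner; simpl; lra.
 - assert (HL : 0 <= L).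
   { pose proof (Hl (fun _ => 1) (fun _ => 0)) as H.
     pose proof (norm_nonneg (S d) (vsub (g (fun _ => 1)) (g (fun _ => 0)))).
     assert (norm (S d) (vsub (fun _ : nat => 1) (fun _ : nat => 0)) = sqrt (INR (S d))).
     { unfold norm. f_equal. rewrite <- (Rmult_1_r (INR (S d))), <- fsum_const.
       apply fsum_ext; intros; unfold vsub; ring. }
     rewrite H1 in H. assert (0 < sqrt (INR (S d))) by (apply sqrt_lt_R0, lt_0_INR; lia).
     destruct (Rle_dec 0 L); auto. nra. }
   apply cocoercive; auto. Qed.

Lemma Hbound n d f g L x xt : (1 <= n)%nat ->
  (forall i, (i < n)%nat -> convex_on (f i)) ->
  (forall i, (i < n)%nat -> has_gradient d (f i) (g i)) ->
  (forall i, (i < n)%nat -> forall y z : nat -> R, norm d (vsub (g i y) (g i z)) <= L * norm d (vsub y z)) ->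
  / INR n * fsum n (fun c => nsq d (vsub (g c x) (g c xt))) <=
  2 * L * (favg n f xt - favg n f x - inner d (gavg n g x) (vsub xt x)).
Proof. intros Hn Hc Hg Hl.
 assert (Hi : inner d (gavg n g x) (vsub xt x) = / INR n * fsum n (fun c => inner d (g c x) (vsub xt x))).
 { unfold inner, gavg. rewrite (fsum_swap n d (fun c k => g c x k * vsub xt x k)).
   rewrite <- fsum_scal. apply fsum_ext; intros.
   rewrite (fsum_ext n (fun i => (fun c k => g c x k * vsub xt x k) i k) (fun c => vsub xt x k * g c x k)) by (intros; cbv beta; ring). rewrite fsum_scal. ring. }
 rewrite Hi. unfold favg.
 replace (2 * L * (/ INR n * fsum n (fun i => f i xt) - / INR n * fsum n (fun i => f i x) -
    / INR n * fsum n (fun c => inner d (g c x) (vsub xt x)))) with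
   (/ INR n * fsum n (fun c => 2 * L * (f c xt - f c x - inner d (g c x) (vsub xt x)))).
 2:{ rewrite fsum_scal, fsum_minus, fsum_minus. ring. }
 apply Rmult_le_compat_l. left; apply Rinv_0_lt_compat, lt_0_INR; lia.
 apply fsum_le. intros c Hc'. apply coco_i; auto. Qed.

Definition Kc d lam b dlam := INR d * lam ^ 2 / (4 * (2 ^ (b - 1) - 1) ^ 2) + dlam * (1 - lam) ^ 2.
Definition Wv n g x xt N B I : nat -> R :=
  fun k => / INR N * fsum N (fun i => uvec g x xt B I i k) + gavg n g xt k - gavg n g x k.

Lemma Dq_eq g x xt d B b lam I i k : (k < d)%nat ->
  Dq g x xt d B b lam I (i * d + k) = qdist (qdelta d lam b (uvec g x xt B I i)) b (uvec g x xt B I i k).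
Proof. intros Hk. unfold Dq. rewrite Nat.div_add_l by lia. rewrite Nat.div_small by auto.
 rewrite Nat.add_0_r. rewrite Nat.add_comm, Nat.Div0.mod_add, Nat.mod_small by auto. reflexivity. Qed.

Lemma Dq_sum1 g x xt d B b lam I : forall j, Ex (Dq g x xt d B b lam I j) (fun _ => 1) = 1.
Proof. intros j; unfold Dq; apply qdist_sum1. Qed.

Lemma Dq_supp g x xt d B b lam I : 0 < lam -> (2 <= b)%nat ->
  forall j aw, In aw (Dq g x xt d B b lam I j) -> True /\ 0 <= snd aw.
Proof. intros Hl Hb j aw H. unfold Dq in H. eapply qdist_supp; [|exact H]. apply qdelta_nonneg; auto. Qed.

Lemma pointwise1 n d g x xt N B I (r : nat -> R) : (1 <= N)%nat ->
  norm d (vsub (vvec n g xt d N r) (gavg n g x)) ^ 2 <=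
  2 / INR N * fsum d (fun k => fsum N (fun i => (r (i * d + k)%nat - uvec g x xt B I i k) ^ 2))
  + 2 * nsq d (Wv n g x xt N B I).
Proof. intros HN. rewrite norm_sq. unfold nsq.
 assert (HN0 : 0 < INR N) by (apply lt_0_INR; lia).
 rewrite <- fsum_scal, <- fsum_scal, <- fsum_plus. apply fsum_le. intros k Hk.
 set (a := / INR N * fsum N (fun i => r (i * d + k)%nat - uvec g x xt B I i k)).
 assert (E1 : vsub (vvec n g xt d N r) (gavg n g x) k = a + Wv n g x xt N B I k).
 { unfold vsub, vvec, Wv, a. rewrite fsum_minus. ring. }
 rewrite E1. set (w := Wv n g x xt N B I k).
 assert (Ha : a ^ 2 <= / INR N * fsum N (fun i => (r (i * d + k)%nat - uvec g x xt B I i k) ^ 2)).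
 { unfold a. pose proof (jensen N (fun i => r (i * d + k)%nat - uvec g x xt B I i k)) as J.
   cbv beta in J.
   replace ((/ INR N * fsum N (fun i => r (i * d + k)%nat - uvec g x xt B I i k)) ^ 2) with
     (/ INR N ^ 2 * (fsum N (fun i => r (i * d + k)%nat - uvec g x xt B I i k)) ^ 2) by (field; lra).
   apply Rmult_le_compat_l with (r := / INR N ^ 2) in J; [|apply Rlt_le, Rinv_0_lt_compat, pow_lt; lra].
   replace (/ INR N ^ 2 * (INR N * fsum N (fun k0 => (r (k0 * d + k)%nat - uvec g x xt B I k0 k) ^ 2)))
     with (/ INR N * fsum N (fun k0 => (r (k0 * d + k)%nat - uvec g x xt B I k0 k) ^ 2)) in J by (field; lra).
   auto. }
 assert (0 <= (a - w) ^ 2) by apply pow2_ge_0.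
 unfold Rdiv. rewrite Rmult_assoc. nra. Qed.

Lemma Er_bound n d g x xt N B b lam dlam I :
 (1 <= N)%nat -> (2 <= b)%nat -> 0 < lam <= 1 -> 0 <= dlam ->
 (forall i, (i < N)%nat -> count_out d (- 2 ^ (b - 1) * qdelta d lam b (uvec g x xt B I i))
     ((2 ^ (b - 1) - 1) * qdelta d lam b (uvec g x xt B I i)) (uvec g x xt B I i) <= dlam) ->
 Eprod 0 (N * d) (Dq g x xt d B b lam I) (fun r => norm d (vsub (vvec n g xt d N r) (gavg n g x)) ^ 2)
 <= 2 * Kc d lam b dlam / INR N * fsum N (fun i => nsq d (uvec g x xt B I i)) + 2 * nsq d (Wv n g x xt N B I).
Proof. intros HN Hb Hl Hdl Hout.
 assert (HN0 : 0 < INR N) by (apply lt_0_INR; lia).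
 eapply Rle_trans.
 { eapply (E_mono 0 (N*d) (Dq g x xt d B b lam I) (fun _ => True)); auto.
   apply Dq_supp; [lra|auto]. intros r _. apply (pointwise1 n d g x xt N B I r HN). }
 rewrite E_plus, E_const by apply Dq_sum1. rewrite E_scal, E_fsum.
 set (u := uvec g x xt B I).
 rewrite (fsum_ext d _ (fun k => fsum N (fun i => Ex (qdist (qdelta d lam b (u i)) b (u i k)) (fun a => (a - u i k) ^ 2)))).
 2:{ intros k Hk. rewrite E_fsum. apply fsum_ext. intros i Hi.
     unfold u; rewrite <- Dq_eq by auto.
     apply (E_marg1 0 (N*d) (Dq g x xt d B b lam I) (i * d + k) (fun a => (a - u i k) ^ 2)).
     apply Dq_sum1. nia. }
 rewrite fsum_swap.
 assert (Hsum : fsum N (fun i => fsum d (fun k => Ex (qdist (qdelta d lam b (u i)) b (u i k)) (fun a => (a - u i k) ^ 2)))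
   <= Kc d lam b dlam * fsum N (fun i => nsq d (u i))).
 { rewrite <- fsum_scal. apply fsum_le. intros i Hi.
   eapply Rle_trans. apply fsum_le. intros k Hk. apply q_var; auto.
   rewrite fsum_plus, fsum_const.
   rewrite (fsum_ext d _ (fun k => (1 - lam) ^ 2 * ninf d (u i) ^ 2 *
     outind (- 2 ^ (b - 1) * qdelta d lam b (u i)) ((2 ^ (b - 1) - 1) * qdelta d lam b (u i)) (u i k))) by (intros; ring).
   rewrite fsum_scal.
   pose proof (Hout i Hi) as Hc. unfold count_out in Hc. fold u in Hc.
   change (fsum d (fun k => outind (- 2 ^ (b - 1) * qdelta d lam b (u i)) ((2 ^ (b - 1) - 1) * qdelta d lam b (u i)) (u i k)) <= dlam) in Hc.
   assert (0 <= (1 - lam) ^ 2 * ninf d (u i) ^ 2) by (apply Rmult_le_pos; apply pow2_ge_0).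
   pose proof (M_ge2 b Hb) as HM.
   assert (Hq : qdelta d lam b (u i) ^ 2 / 4 = lam ^ 2 / (4 * (2 ^ (b - 1) - 1) ^ 2) * ninf d (u i) ^ 2)
     by (unfold qdelta; field; lra).
   rewrite Hq.
   assert (HK : 0 <= Kc d lam b dlam).
   { unfold Kc. apply Rplus_le_le_0_compat; [|apply Rmult_le_pos; auto; apply pow2_ge_0].
     unfold Rdiv. apply Rmult_le_pos; [apply Rmult_le_pos; [apply pos_INR|apply pow2_ge_0]|].
     left; apply Rinv_0_lt_compat. apply Rmult_lt_0_compat; [lra|apply pow_lt; lra]. }
   pose proof (ninf_nsq d (u i)).
   apply Rle_trans with (Kc d lam b dlam * ninf d (u i) ^ 2).
   2:{ apply Rmult_le_compat_l; auto. }
   unfold Kc.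
   assert ((1 - lam) ^ 2 * ninf d (u i) ^ 2 * fsum d (fun k => outind (- 2 ^ (b - 1) * qdelta d lam b (u i))
       ((2 ^ (b - 1) - 1) * qdelta d lam b (u i)) (u i k)) <= (1 - lam) ^ 2 * ninf d (u i) ^ 2 * dlam)
     by (apply Rmult_le_compat_l; auto).
   replace ((INR d * lam ^ 2 / (4 * (2 ^ (b - 1) - 1) ^ 2) + dlam * (1 - lam) ^ 2) * ninf d (u i) ^ 2)
     with (INR d * (lam ^ 2 / (4 * (2 ^ (b - 1) - 1) ^ 2) * ninf d (u i) ^ 2) + (1 - lam) ^ 2 * ninf d (u i) ^ 2 * dlam)
     by (field; lra).
   lra. }
 unfold Rdiv. 
 assert (0 <= 2 * / INR N) by (apply Rmult_le_pos; [lra|left; apply Rinv_0_lt_compat; lra]).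
 apply Rplus_le_compat_r.
 replace (2 * Kc d lam b dlam * / INR N * fsum N (fun i => nsq d (u i))) with
   (2 * / INR N * (Kc d lam b dlam * fsum N (fun i => nsq d (u i)))) by ring.
 apply Rmult_le_compat_l; auto. Qed.

Lemma unif_supp' n : forall (j : nat) (aw : nat * R), In aw (Dunif n) -> True /\ 0 <= snd aw.
Proof. intros j aw H. split; auto. apply (unif_supp n j aw H). Qed.

Definition Hq n d (g : nat -> (nat -> R) -> nat -> R) x xt :=
  / INR n * fsum n (fun c => nsq d (vsub (g c x) (g c xt))).

Lemma nsq_ext d u v : (forall k, (k < d)%nat -> u k = v k) -> nsq d u = nsq d v.
Proof. intros H; unfold nsq; apply fsum_ext; intros; rewrite H; auto. Qed.

Lemma E_mean_sq n d g x xt m : (1 <= n)%nat -> (1 <= m)%nat ->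
  Eprod 0%nat m (fun _ => Dunif n) (fun s => nsq d (fun k =>
     / INR m * fsum m (fun j => g (s j) x k - g (s j) xt k) - / INR n * fsum n (fun c => g c x k - g c xt k)))
  <= / INR m * Hq n d g x xt.
Proof. intros Hn Hm. unfold nsq at 1. rewrite E_fsum.
 eapply Rle_trans. apply fsum_le. intros k Hk. apply (var_mean n m (fun c => g c x k - g c xt k)); auto.
 rewrite fsum_scal. apply Rmult_le_compat_l. left; apply Rinv_0_lt_compat, lt_0_INR; lia.
 rewrite fsum_scal. unfold Hq. right. f_equal. rewrite fsum_swap. apply fsum_ext; intros; unfold nsq, vsub; auto. Qed.

Lemma EI_u n d g x xt N B i : (1 <= n)%nat -> (1 <= B)%nat -> (i < N)%nat ->
  Eprod 0%nat (N * B) (fun _ => Dunif n) (fun I => nsq d (uvec g x xt B I i)) <= Hq n d g x xt.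
Proof. intros Hn HB Hi. assert (HB0 : 0 < INR B) by (apply lt_0_INR; lia).
 eapply Rle_trans.
 { eapply (E_mono 0%nat (N * B) (fun _ => Dunif n) (fun _ => True)); auto. apply unif_supp'.
   intros I _.
   instantiate (1 := fun I => / INR B * fsum B (fun a => nsq d (vsub (g (I (i * B + a)%nat) x) (g (I (i * B + a)%nat) xt)))).
   cbv beta. unfold nsq. rewrite fsum_swap, <- fsum_scal. apply fsum_le. intros k Hk.
   unfold uvec. pose proof (jensen B (fun a => g (I (i * B + a)%nat) x k - g (I (i * B + a)%nat) xt k)) as J.
   cbv beta in J. unfold vsub.
   set (S1 := fsum B (fun a => g (I (i * B + a)%nat) x k - g (I (i * B + a)%nat) xt k)) in *.
   set (S2 := fsum B (fun a => (g (I (i * B + a)%nat) x k - g (I (i * B + a)%nat) xt k) ^ 2)) in *.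
   replace ((/ INR B * S1) ^ 2) with (/ INR B ^ 2 * S1 ^ 2) by (field; lra).
   apply Rle_trans with (/ INR B ^ 2 * (INR B * S2)).
   apply Rmult_le_compat_l; auto. apply Rlt_le, Rinv_0_lt_compat, pow_lt; lra.
   right; field; lra. }
 rewrite E_scal, E_fsum.
 rewrite (fsum_ext B _ (fun _ => Hq n d g x xt)).
 rewrite fsum_const. right; field; lra.
 intros a Ha. unfold Hq. rewrite <- Ex_unif.
 apply (E_marg1 0%nat (N * B) (fun _ => Dunif n) (i * B + a) (fun c => nsq d (vsub (g c x) (g c xt)))).
 intros; apply unif_sum1; auto. nia. Qed.

Lemma W_eq n g x xt N B I k : (1 <= n)%nat -> (1 <= N)%nat -> (1 <= B)%nat ->
  Wv n g x xt N B I k = / INR (N * B) * fsum (N * B) (fun j => g (I j) x k - g (I j) xt k)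
    - / INR n * fsum n (fun c => g c x k - g c xt k).
Proof. intros Hn HN HB. unfold Wv, uvec, gavg.
 rewrite (fsum_scal N (/ INR B) (fun i => fsum B (fun a => g (I (i * B + a)%nat) x k - g (I (i * B + a)%nat) xt k))).
 rewrite (fsum_nested N B (fun j => g (I j) x k - g (I j) xt k)).
 rewrite !fsum_minus, mult_INR. field. repeat split; apply not_0_INR; lia. Qed.

Lemma EI_W n d g x xt N B : (1 <= n)%nat -> (1 <= N)%nat -> (1 <= B)%nat ->
  Eprod 0%nat (N * B) (fun _ => Dunif n) (fun I => nsq d (Wv n g x xt N B I)) <= / INR (N * B) * Hq n d g x xt.
Proof. intros Hn HN HB. rewrite (E_ext _ _ _ _ (fun s => nsq d (fun k =>
     / INR (N * B) * fsum (N * B) (fun j => g (s j) x k - g (s j) xt k) - / INR n * fsum n (fun c => g c x k - g c xt k)))).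
 apply E_mean_sq; auto. nia.
 intros I. apply nsq_ext. intros k _. apply W_eq; auto. Qed.

Lemma EI_G n d g x xt N B K : (1 <= n)%nat -> (1 <= N)%nat -> (1 <= B)%nat -> 0 <= K ->
  Eprod 0%nat (N * B) (fun _ => Dunif n) (fun I =>
    2 * K / INR N * fsum N (fun i => nsq d (uvec g x xt B I i)) + 2 * nsq d (Wv n g x xt N B I))
  <= 2 * (K + / INR (N * B)) * Hq n d g x xt.
Proof. intros Hn HN HB HK. rewrite E_plus, E_scal, E_scal, E_fsum.
 assert (HN0 : 0 < INR N) by (apply lt_0_INR; lia).
 assert (fsum N (fun i => Eprod 0%nat (N * B) (fun _ => Dunif n) (fun I => nsq d (uvec g x xt B I i)))
   <= INR N * Hq n d g x xt).
 { rewrite <- fsum_const. apply fsum_le. intros; apply EI_u; auto. }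
 pose proof (EI_W n d g x xt N B Hn HN HB).
 assert (0 <= 2 * K / INR N) by (unfold Rdiv; apply Rmult_le_pos; [lra|left; apply Rinv_0_lt_compat; lra]).
 apply Rle_trans with (2 * K / INR N * (INR N * Hq n d g x xt) + 2 * (/ INR (N * B) * Hq n d g x xt)).
 apply Rplus_le_compat. apply Rmult_le_compat_l; auto. apply Rmult_le_compat_l; auto; lra.
 right. field. split; [apply not_0_INR; nia|lra]. Qed.

Lemma Part1 n d g x xt N B b lam dlam : (1 <= n)%nat -> (1 <= N)%nat -> (1 <= B)%nat -> (2 <= b)%nat ->
  0 < lam <= 1 -> 0 <= dlam ->
  (forall I : nat -> nat, (forall j, (j < N * B)%nat -> (I j < n)%nat) ->
     forall i, (i < N)%nat ->
       count_out d (- 2 ^ (b - 1) * qdelta d lam b (uvec g x xt B I i))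
                   ((2 ^ (b - 1) - 1) * qdelta d lam b (uvec g x xt B I i))
                   (uvec g x xt B I i) <= dlam) ->
  Eprod 0%nat (N * B) (fun _ => Dunif n) (fun I =>
    Eprod 0 (N * d) (Dq g x xt d B b lam I) (fun r =>
      norm d (vsub (vvec n g xt d N r) (gavg n g x)) ^ 2))
  <= 2 * (Kc d lam b dlam + / INR (N * B)) * Hq n d g x xt.
Proof. intros Hn HN HB Hb Hl Hdl Hout.
 assert (HK : 0 <= Kc d lam b dlam).
 { pose proof (M_ge2 b Hb). unfold Kc. apply Rplus_le_le_0_compat; [|apply Rmult_le_pos; auto; apply pow2_ge_0].
   unfold Rdiv. apply Rmult_le_pos; [apply Rmult_le_pos; [apply pos_INR|apply pow2_ge_0]|].
   left; apply Rinv_0_lt_compat. apply Rmult_lt_0_compat; [lra|apply pow_lt; lra]. }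
 eapply Rle_trans; [|apply (EI_G n d g x xt N B (Kc d lam b dlam)); auto].
 apply (E_mono 0%nat (N * B) (fun _ => Dunif n) (fun c => (c < n)%nat)). lia.
 intros j aw Ha; apply (unif_supp n j aw Ha).
 intros I HI. apply Er_bound; auto. Qed.

Lemma EJ_A n d g x xt B : (1 <= n)%nat -> (1 <= B)%nat ->
  Eprod 0%nat B (fun _ => Dunif n) (fun J => nsq d (fun k => vhat n g x xt B J k - gavg n g x k))
  <= / INR B * Hq n d g x xt.
Proof. intros Hn HB. rewrite (E_ext _ _ _ _ (fun s => nsq d (fun k =>
     / INR B * fsum B (fun j => g (s j) x k - g (s j) xt k) - / INR n * fsum n (fun c => g c x k - g c xt k)))).
 apply E_mean_sq; auto.
 intros J. apply nsq_ext. intros k _. unfold vhat, gavg. rewrite !fsum_minus. ring. Qed.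

Lemma EJ_A1 n g x xt B k : (1 <= n)%nat -> (1 <= B)%nat ->
  Eprod 0%nat B (fun _ => Dunif n) (fun J => vhat n g x xt B J k - gavg n g x k) = 0.
Proof. intros Hn HB. unfold vhat, gavg.
 rewrite (E_ext _ _ _ _ (fun J => / INR B * fsum B (fun a => g (J a) x k - g (J a) xt k) +
    (/ INR n * fsum n (fun i => g i xt k) - / INR n * fsum n (fun i => g i x k)))) by (intros; ring).
 rewrite E_plus, E_const by (intros; apply unif_sum1; auto). rewrite E_scal, E_fsum.
 rewrite (fsum_ext B _ (fun _ => / INR n * fsum n (fun c => g c x k - g c xt k))).
 rewrite fsum_const, fsum_minus. field. split; apply not_0_INR; lia.
 intros a Ha. rewrite <- Ex_unif.
 apply (E_marg1 0%nat B (fun _ => Dunif n) a (fun c => g c x k - g c xt k)); auto.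
 intros; apply unif_sum1; auto. Qed.

Lemma pw2 d (a c e : nat -> R) :
  norm d (vsub a c) ^ 2 = nsq d (fun k => a k - e k) + norm d (vsub c e) ^ 2
     - 2 * fsum d (fun k => (a k - e k) * (c k - e k)).
Proof. rewrite !norm_sq. unfold nsq. rewrite <- fsum_scal, <- fsum_plus, <- fsum_minus.
 apply fsum_ext; intros; unfold vsub; ring. Qed.

Lemma Part2eq n d g x xt N B b lam : (1 <= n)%nat -> (1 <= B)%nat ->
  Eprod 0%nat B (fun _ => Dunif n) (fun J =>
    Eprod 0%nat (N * B) (fun _ => Dunif n) (fun I =>
      Eprod 0 (N * d) (Dq g x xt d B b lam I) (fun r =>
        norm d (vsub (vhat n g x xt B J) (vvec n g xt d N r)) ^ 2)))
  = Eprod 0%nat B (fun _ => Dunif n) (fun J => nsq d (fun k => vhat n g x xt B J k - gavg n g x k))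
    + Eprod 0%nat (N * B) (fun _ => Dunif n) (fun I =>
      Eprod 0 (N * d) (Dq g x xt d B b lam I) (fun r =>
        norm d (vsub (vvec n g xt d N r) (gavg n g x)) ^ 2)).
Proof. intros Hn HB.
 set (A := fun J k => vhat n g x xt B J k - gavg n g x k).
 set (C := fun r k => vvec n g xt d N r k - gavg n g x k).
 set (DI := fun _ : nat => Dunif n).
 assert (Hs1 : forall j : nat, Ex (DI j) (fun _ => 1) = 1) by (intros; apply unif_sum1; auto).
 set (V := fun I => Eprod 0 (N * d) (Dq g x xt d B b lam I) (fun r => norm d (vsub (vvec n g xt d N r) (gavg n g x)) ^ 2)).
 set (X := fun k I => Eprod 0 (N * d) (Dq g x xt d B b lam I) (fun r => C r k)).
 rewrite (E_ext _ _ _ _ (fun J => nsq d (A J) + Eprod 0%nat (N * B) DI V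
      - 2 * fsum d (fun k => A J k * Eprod 0%nat (N * B) DI (X k)))).
 2:{ intros J.
   rewrite (E_ext _ _ _ _ (fun I => nsq d (A J) + V I - 2 * fsum d (fun k => A J k * X k I))).
   - rewrite E_minus, E_plus, E_const by auto. rewrite E_scal, E_fsum. erewrite fsum_ext; [reflexivity|].
     intros; unfold X. cbv beta. apply E_scal.
   - intros I. unfold V, X.
     rewrite (E_ext _ _ _ _ (fun r => nsq d (A J) + norm d (vsub (vvec n g xt d N r) (gavg n g x)) ^ 2
        - 2 * fsum d (fun k => A J k * C r k))).
     + rewrite E_minus, E_plus, E_const by apply Dq_sum1. rewrite E_scal, E_fsum. erewrite fsum_ext; [reflexivity|].
       intros. cbv beta. apply E_scal.
     + intros r. apply pw2. }
 rewrite E_minus, E_plus, E_const by auto. rewrite E_scal, E_fsum.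
 rewrite (fsum_ext d _ (fun _ => 0)). rewrite fsum_const. unfold A, DI, V. ring.
 intros k Hk. rewrite (E_ext _ _ _ _ (fun J => Eprod 0%nat (N * B) DI (X k) * A J k)) by (intros; ring).
 rewrite E_scal. unfold A, DI. rewrite EJ_A1; auto. ring. Qed.

Theorem mainTheorem7
  (n d : nat) (f : nat -> (nat -> R) -> R) (g : nat -> (nat -> R) -> (nat -> R)) (L : R)
  (Hn : (1 <= n)%nat)
  (Hconv : forall i, (i < n)%nat -> convex_on (f i))
  (Hgrad : forall i, (i < n)%nat -> has_gradient d (f i) (g i))
  (Hlip : forall i, (i < n)%nat -> forall y z : nat -> R,
            norm d (vsub (g i y) (g i z)) <= L * norm d (vsub y z))
  (x xt : nat -> R) (N B b : nat) (lam dlam : R)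
  (HN : (1 <= N)%nat) (HB : (1 <= B)%nat) (Hb : (2 <= b)%nat)
  (Hlam : 0 < lam <= 1) (Hdlam : 0 <= dlam)
  (Hout : forall I : nat -> nat, (forall j, (j < N * B)%nat -> (I j < n)%nat) ->
     forall i, (i < N)%nat ->
       count_out d (- 2 ^ (b - 1) * qdelta d lam b (uvec g x xt B I i))
                   ((2 ^ (b - 1) - 1) * qdelta d lam b (uvec g x xt B I i))
                   (uvec g x xt B I i) <= dlam) :
  let zeta := INR d * lam ^ 2 / (4 * (2 ^ (b - 1) - 1) ^ 2) + dlam * (1 - lam) ^ 2
              + 1 / (INR N * INR B) in
  let breg := favg n f xt - favg n f x - inner d (gavg n g x) (vsub xt x) in
  Eprod 0%nat (N * B) (fun _ => Dunif n) (fun I =>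
    Eprod 0 (N * d) (Dq g x xt d B b lam I) (fun r =>
      norm d (vsub (vvec n g xt d N r) (gavg n g x)) ^ 2))
  <= 4 * L * zeta * breg
  /\
  Eprod 0%nat B (fun _ => Dunif n) (fun J =>
    Eprod 0%nat (N * B) (fun _ => Dunif n) (fun I =>
      Eprod 0 (N * d) (Dq g x xt d B b lam I) (fun r =>
        norm d (vsub (vhat n g x xt B J) (vvec n g xt d N r)) ^ 2)))
  <= 4 * L * (1 / (2 * INR B) + INR d * lam ^ 2 / (4 * (2 ^ (b - 1) - 1) ^ 2)
              + dlam * (1 - lam) ^ 2 + 1 / (INR N * INR B)) * breg.
Proof. intros zeta breg.
 pose proof (Hbound n d f g L x xt Hn Hconv Hgrad Hlip) as HH. fold breg in HH.
 change (/ INR n * fsum n (fun c => nsq d (vsub (g c x) (g c xt)))) with (Hq n d g x xt) in HH.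
 pose proof (Part1 n d g x xt N B b lam dlam Hn HN HB Hb Hlam Hdlam Hout) as P1.
 assert (Hz : zeta = Kc d lam b dlam + / INR (N * B)).
 { unfold zeta, Kc. rewrite mult_INR. pose proof (M_ge2 b Hb). field. repeat split; try (apply not_0_INR; lia); lra. }
 assert (HK : 0 <= Kc d lam b dlam).
 { pose proof (M_ge2 b Hb). unfold Kc. apply Rplus_le_le_0_compat; [|apply Rmult_le_pos; auto; apply pow2_ge_0].
   unfold Rdiv. apply Rmult_le_pos; [apply Rmult_le_pos; [apply pos_INR|apply pow2_ge_0]|].
   left; apply Rinv_0_lt_compat. apply Rmult_lt_0_compat; [lra|apply pow_lt; lra]. }
 assert (HNB : 0 < / INR (N * B)) by (apply Rinv_0_lt_compat, lt_0_INR; nia).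
 assert (Hzp : 0 <= zeta) by lra.
 assert (L1 : Eprod 0%nat (N * B) (fun _ => Dunif n) (fun I =>
    Eprod 0 (N * d) (Dq g x xt d B b lam I) (fun r =>
      norm d (vsub (vvec n g xt d N r) (gavg n g x)) ^ 2)) <= 4 * L * zeta * breg).
 { eapply Rle_trans. apply P1. rewrite <- Hz.
   replace (4 * L * zeta * breg) with (2 * zeta * (2 * L * breg)) by ring.
   apply Rmult_le_compat_l; lra. }
 split; auto.
 rewrite Part2eq by auto.
 pose proof (EJ_A n d g x xt B Hn HB) as HA.
 assert (HB0 : 0 < INR B) by (apply lt_0_INR; lia).
 assert (/ INR B * Hq n d g x xt <= / INR B * (2 * L * breg)).
 { apply Rmult_le_compat_l; auto. left; apply Rinv_0_lt_compat; auto. }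
 replace (4 * L * (1 / (2 * INR B) + INR d * lam ^ 2 / (4 * (2 ^ (b - 1) - 1) ^ 2)
              + dlam * (1 - lam) ^ 2 + 1 / (INR N * INR B)) * breg)
   with (/ INR B * (2 * L * breg) + 4 * L * zeta * breg) by (unfold zeta; pose proof (M_ge2 b Hb); assert (INR N <> 0) by (apply not_0_INR; lia); field; repeat split; lra).
 lra. Qed.
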